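(* Let $(\Lambda,d)$ be a $2$-graph such that $\Lambda$ is row-finite, the blue graph $\Lambda_{\mathrm b}$ contains no cycles, and each vertex is the range of an isolated cycle lying in the red graph $\Lambda_{\mathrm r}$. Let $\lambda_1,\lambda_2$ be isolated cycles in $\Lambda_{\mathrm r}$ and let $V_1,V_2$ be the sets of vertices on $\lambda_1,\lambda_2$. (1) For every red path $\mu$ with $r(\mu)\in V_1$, the map $\sigma\mapsto\mathcal F_1(\mu,\sigma)$ is a degree-preserving bijection from $s(\mu)\Lambda_{\mathrm b}V_2$ onto $r(\mu)\Lambda_{\mathrm b}V_2$. (2) For every red path $\nu$ with $r(\nu)\in V_2$, the map $\sigma\mapsto\mathcal F_2(\sigma,\nu)$ is a degree-preserving bijection from $V_1\Lambda_{\mathrm b}r(\nu)$ onto $V_1\Lambda_{\mathrm b}s(\nu)$.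
   Context: A $2$-graph is a countable category $\Lambda$ with a functor $d:\Lambda\to\mathbb N^2$ satisfying the unique factorisation property (if $d(\lambda)=m+n$ there are unique $\mu,\nu$ with $d(\mu)=m,d(\nu)=n,\lambda=\mu\nu$). Vertices $\Lambda^0$ are the degree-$0$ paths; $r,s$ are range and source; $\mu\nu$ is defined when $s(\mu)=r(\nu)$; $\Lambda^n=d^{-1}(n)$, $e_1=(1,0)$, $e_2=(0,1)$. For sets $V,W$ of vertices and $E\subseteq\Lambda$, $VEW=\{\lambda\in E:r(\lambda)\in V,s(\lambda)\in W\}$ (with $v$ for $\{v\}$). For $0\le m\le n\le d(\lambda)$, $\lambda(m,n)$ is the unique path with $\lambda=\lambda'\lambda(m,n)\lambda''$, $d(\lambda')=m$, $d(\lambda(m,n))=n-m$, and $\lambda(n)=\lambda(n,n)$. Blue paths: degree in $\mathbb Ne_1$; red paths: degree in $\mathbb Ne_2$; $\Lambda_{\mathrm b},\Lambda_{\mathrm r}$ the sets of blue/red paths. Row-finite: $v\Lambda^n$ finite for all $v,n$. A cycle is a path $\lambda$ with $d(\lambda)\ne0$, $r(\lambda)=s(\lambda)$, $\lambda(n)\neq s(\lambda)$ for $0<n<d(\lambda)$; it is isolated if there is no $n\le d(\lambda)$ with $r(\lambda)\Lambda^n\setminus\{\lambda(0,n)\}\ne\emptyset$ and no $n\le d(\lambda)$ with $\Lambda^ns(\lambda)\setminus\{\lambda(d(\lambda)-n,d(\lambda))\}\neq\emptyset$. For $\rho,\tau$ with $s(\rho)=r(\tau)$, $\mathcal F_1(\rho,\tau):=(\rho\tau)(0,d(\tau))$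 and $\mathcal F_2(\rho,\tau):=(\rho\tau)(d(\tau),d(\rho\tau))$, so $\mathcal F_1(\rho,\tau)\mathcal F_2(\rho,\tau)=\rho\tau$. *)

(* Defs.v *)
(* A 2-graph encoded as a small category with degree functor. *)
From Stdlib Require Import List Arith.
Set Implicit Arguments.

Definition deg := (nat * nat)%type.
Definition dadd (m n : deg) : deg := (fst m + fst n, snd m + snd n).
Definition dsub (m n : deg) : deg := (fst m - fst n, snd m - snd n).
Definition dle (m n : deg) : Prop := fst m <= fst n /\ snd m <= snd n.
Definition d0 : deg := (0, 0).

(* A 2-graph: objects (vertices) V, morphisms (paths) P, identity, composition
   [comp mu nu] = mu nu (meaningful when s mu = r nu), degree functor dg, and
   the factorisation map [fac l m] = (mu, nu) with d(mu)=m, l = mu nu. *)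
Record twograph := {
  V : Type;
  P : Type;
  rg : P -> V;
  sc : P -> V;
  idp : V -> P;
  comp : P -> P -> P;
  dg : P -> deg;
  fac : P -> deg -> P * P;
  P_countable : exists f : P -> nat, forall x y, f x = f y -> x = y;
  rg_id : forall v, rg (idp v) = v;
  sc_id : forall v, sc (idp v) = v;
  dg_id : forall v, dg (idp v) = d0;
  comp_id_l : forall x, comp (idp (rg x)) x = x;
  comp_id_r : forall x, comp x (idp (sc x)) = x;
  rg_comp : forall x y, sc x = rg y -> rg (comp x y) = rg x;
  sc_comp : forall x y, sc x = rg y -> sc (comp x y) = sc y;
  dg_comp : forall x y, sc x = rg y -> dg (comp x y) = dadd (dg x) (dg y);
  comp_assoc : forall x y z, sc x = rg y -> sc y = rg z ->
      comp (comp x y) z = comp x (comp y z);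
  fac_spec : forall l m n, dg l = dadd m n ->
      sc (fst (fac l m)) = rg (snd (fac l m)) /\ dg (fst (fac l m)) = m /\
      dg (snd (fac l m)) = n /\ comp (fst (fac l m)) (snd (fac l m)) = l;
  fac_unique : forall l m n mu nu, dg l = dadd m n ->
      sc mu = rg nu -> dg mu = m -> dg nu = n -> comp mu nu = l ->
      mu = fst (fac l m) /\ nu = snd (fac l m)
}.

Section Defs.
Variable L : twograph.

(* lambda(m,n) for 0 <= m <= n <= d(lambda) *)
Definition seg (l : P L) (m n : deg) : P L := snd (fac L (fst (fac L l n)) m).
Definition pt (l : P L) (n : deg) : P L := seg l n n.

Definition F1 (rho tau : P L) : P L := seg (comp L rho tau) d0 (dg L tau).
Definition F2 (rho tau : P L) : P L :=
  seg (comp L rho tau) (dg L tau) (dg L (comp L rho tau)).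

Definition blue (x : P L) : Prop := snd (dg L x) = 0.
Definition red (x : P L) : Prop := fst (dg L x) = 0.

Definition row_finite : Prop :=
  forall (v : V L) (n : deg), exists lst : list (P L),
    forall x, rg L x = v -> dg L x = n -> In x lst.

Definition cycle (l : P L) : Prop :=
  dg L l <> d0 /\ rg L l = sc L l /\
  forall n, dle n (dg L l) -> n <> d0 -> n <> dg L l ->
    pt l n <> idp L (sc L l).

Definition isolated_cycle (l : P L) : Prop :=
  cycle l /\
  (forall n x, dle n (dg L l) -> rg L x = rg L l -> dg L x = n ->
     x = seg l d0 n) /\
  (forall n x, dle n (dg L l) -> sc L x = sc L l -> dg L x = n ->
     x = seg l (dsub (dg L l) n) (dg L l)).

Definition on_path (l : P L) (v : V L) : Prop :=
  exists n, dle n (dg L l) /\ pt l n = idp L v.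

End Defs.
Arguments seg {L}. Arguments pt {L}. Arguments F1 {L}. Arguments F2 {L}.
Arguments blue {L}. Arguments red {L}. Arguments cycle {L}.
Arguments isolated_cycle {L}. Arguments on_path {L}.

(* Main.v *)
Require Import Defs.
From Stdlib Require Import List Arith Lia.

Definition HisoP (L : twograph) := forall v : V L, exists l : P L,
  red l /\ isolated_cycle l /\ rg L l = v.

Lemma fac_eq (L : twograph) (mu nu : P L) :
  sc L mu = rg L nu -> fac L (comp L mu nu) (dg L mu) = (mu, nu).
Proof.
  intro H.
  destruct (@fac_unique L (comp L mu nu) (dg L mu) (dg L nu) mu nu
     (dg_comp L mu nu H) H eq_refl eq_refl eq_refl) as [E1 E2].
  rewrite (surjective_pairing (fac L (comp L mu nu) (dg L mu))).
  f_equal; symmetry; assumption.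
Qed.

Lemma fac_ex (L : twograph) (l : P L) m n : dg L l = dadd m n ->
  exists a b, sc L a = rg L b /\ dg L a = m /\ dg L b = n /\ comp L a b = l
    /\ fac L l m = (a,b).
Proof.
  intro H. destruct (@fac_spec L l m n H) as (A&B&C&D).
  exists (fst (fac L l m)), (snd (fac L l m)). repeat split; auto.
  apply surjective_pairing.
Qed.

Lemma fac_first0 (L : twograph) (a : P L) : fac L a d0 = (idp L (rg L a), a).
Proof.
  pose proof (fac_eq L (idp L (rg L a)) a (sc_id L _)) as E.
  rewrite comp_id_l, dg_id in E. exact E.
Qed.

Lemma fac_full (L : twograph) (a : P L) : fac L a (dg L a) = (a, idp L (sc L a)).
Proof.
  pose proof (fac_eq L a (idp L (sc L a)) (eq_sym (rg_id L _))) as E.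
  rewrite comp_id_r in E. exact E.
Qed.

Lemma fac_full' (L : twograph) (a : P L) n : dg L a = n -> fac L a n = (a, idp L (sc L a)).
Proof. intro H; subst; apply fac_full. Qed.

Lemma F1_eq (L : twograph) (mu sg a b : P L) :
  sc L mu = rg L sg -> sc L a = rg L b -> dg L a = dg L sg ->
  comp L a b = comp L mu sg -> F1 mu sg = a.
Proof.
  intros H1 H2 H3 H4. unfold F1, seg.
  rewrite <- H4, <- H3, fac_eq by exact H2. simpl. rewrite fac_first0. reflexivity.
Qed.

Lemma F2_eq (L : twograph) (sg nu a b : P L) :
  sc L a = rg L b -> dg L a = dg L nu ->
  comp L a b = comp L sg nu -> F2 sg nu = b.
Proof.
  intros H2 H3 H4. unfold F2, seg. rewrite fac_full. simpl.
  rewrite <- H4, <- H3, fac_eq by exact H2. reflexivity.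
Qed.

Lemma deg0_id (L : twograph) (x : P L) : dg L x = d0 -> x = idp L (rg L x).
Proof.
  intro H.
  assert (Hd : dg L x = dadd d0 d0) by (rewrite H; reflexivity).
  destruct (@fac_unique L x d0 d0 (idp L (rg L x)) x Hd (sc_id L _) (dg_id L _) H
     (comp_id_l L x)) as [E1 _].
  destruct (@fac_unique L x d0 d0 x (idp L (sc L x)) Hd (eq_sym (rg_id L _)) H
     (dg_id L _) (comp_id_r L x)) as [E3 _].
  congruence.
Qed.

Lemma red_dg (L : twograph) (x : P L) : red x -> dg L x = (0, snd (dg L x)).
Proof. unfold red. intro H. destruct (dg L x); simpl in *; subst; reflexivity. Qed.

Lemma rcyc (L : twograph) (l : P L) : red l -> isolated_cycle l ->
  rg L l = sc L l /\ exists K, K >= 1 /\ dg L l = (0,K).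
Proof.
  intros Hr [[Hd [Hrs _]] _]. split; auto. exists (snd (dg L l)). split.
  - destruct (snd (dg L l)) eqn:Es; [|lia]. exfalso. apply Hd.
    rewrite (red_dg L l Hr), Es. reflexivity.
  - apply red_dg; exact Hr.
Qed.

Lemma red_edge_rg (L : twograph) (Hiso : HisoP L) (e f : P L) :
  dg L e = (0,1) -> dg L f = (0,1) -> rg L e = rg L f -> e = f.
Proof.
  intros He Hf Hr. destruct (Hiso (rg L e)) as (c & Hc & Hi & Hrc).
  destruct (rcyc L c Hc Hi) as (Hrs & K & HK & Hd).
  destruct Hi as (_ & I2 & _).
  assert (Hle : dle (0,1) (dg L c)) by (rewrite Hd; unfold dle; simpl; lia).
  transitivity (seg c d0 (0,1)).
  - apply I2; [exact Hle | congruence | exact He].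
  - symmetry. apply I2; [exact Hle | congruence | exact Hf].
Qed.

Lemma red_edge_sc (L : twograph) (Hiso : HisoP L) (e f : P L) :
  dg L e = (0,1) -> dg L f = (0,1) -> sc L e = sc L f -> e = f.
Proof.
  intros He Hf Hr. destruct (Hiso (sc L e)) as (c & Hc & Hi & Hrc).
  destruct (rcyc L c Hc Hi) as (Hrs & K & HK & Hd).
  destruct Hi as (_ & _ & I3).
  assert (Hle : dle (0,1) (dg L c)) by (rewrite Hd; unfold dle; simpl; lia).
  transitivity (seg c (dsub (dg L c) (0,1)) (dg L c)).
  - apply I3; [exact Hle | congruence | exact He].
  - symmetry. apply I3; [exact Hle | congruence | exact Hf].
Qed.

Lemma red_unique_rg (L : twograph) (Hiso : HisoP L) : forall k (x y : P L),
  dg L x = (0,k) -> dg L y = (0,k) -> rg L x = rg L y -> x = y.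
Proof.
  induction k; intros x y Hx Hy Hr.
  - rewrite (deg0_id L x Hx), (deg0_id L y Hy), Hr. reflexivity.
  - destruct (fac_ex L x (0,1) (0,k)) as (e1 & x1 & A1 & B1 & C1 & D1 & _).
    { rewrite Hx. reflexivity. }
    destruct (fac_ex L y (0,1) (0,k)) as (e2 & y1 & A2 & B2 & C2 & D2 & _).
    { rewrite Hy. reflexivity. }
    assert (e1 = e2).
    { apply (red_edge_rg L Hiso); auto.
      rewrite <- (rg_comp L e1 x1 A1), <- (rg_comp L e2 y1 A2), D1, D2. exact Hr. }
    subst e2. assert (x1 = y1) by (apply IHk; congruence).
    rewrite <- D1, <- D2. congruence.
Qed.

Lemma red_unique_sc (L : twograph) (Hiso : HisoP L) : forall k (x y : P L),
  dg L x = (0,k) -> dg L y = (0,k) -> sc L x = sc L y -> x = y.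
Proof.
  induction k; intros x y Hx Hy Hs.
  - pose proof (deg0_id L x Hx) as Ex. pose proof (deg0_id L y Hy) as Ey.
    assert (H : rg L x = rg L y).
    { rewrite <- (sc_id L (rg L x)), <- (sc_id L (rg L y)), <- Ex, <- Ey. exact Hs. }
    rewrite Ex, Ey, H. reflexivity.
  - assert (Ex : dg L x = dadd (0,k) (0,1)) by (rewrite Hx; unfold dadd; simpl; f_equal; lia).
    assert (Ey : dg L y = dadd (0,k) (0,1)) by (rewrite Hy; unfold dadd; simpl; f_equal; lia).
    destruct (fac_ex L x _ _ Ex) as (x1 & e1 & A1 & B1 & C1 & D1 & _).
    destruct (fac_ex L y _ _ Ey) as (y1 & e2 & A2 & B2 & C2 & D2 & _).
    assert (e1 = e2).
    { apply (red_edge_sc L Hiso); auto.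
      rewrite <- (sc_comp L x1 e1 A1), <- (sc_comp L y1 e2 A2), D1, D2. exact Hs. }
    subst e2. assert (x1 = y1) by (apply IHk; congruence).
    rewrite <- D1, <- D2. congruence.
Qed.

Fixpoint lpow (L : twograph) (l : P L) (q : nat) : P L :=
  match q with 0 => idp L (rg L l) | S q => comp L l (lpow L l q) end.

Lemma lpow_spec (L : twograph) (l : P L) K : rg L l = sc L l -> dg L l = (0,K) ->
  forall q, rg L (lpow L l q) = rg L l /\ sc L (lpow L l q) = rg L l /\
            dg L (lpow L l q) = (0, q*K).
Proof.
  intros Hrs Hd. induction q as [|q IH]; simpl.
  - rewrite rg_id, sc_id, dg_id. auto.
  - destruct IH as (A&B&C). assert (E : sc L l = rg L (lpow L l q)) by congruence.
    rewrite rg_comp, sc_comp, dg_comp by exact E. rewrite Hd, C. unfold dadd; simpl.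
    split; [reflexivity|split; [congruence|reflexivity]].
Qed.

Lemma pt_eq (L : twograph) (l : P L) n m : dg L l = dadd n m ->
  pt l n = idp L (sc L (fst (fac L l n))).
Proof.
  intro H. destruct (@fac_spec L l n m H) as (_&B&_&_). unfold pt, seg.
  rewrite (fac_full' L _ n B). reflexivity.
Qed.

Lemma onpath_intro (L : twograph) (l : P L) n m : dg L l = dadd n m ->
  on_path l (sc L (fst (fac L l n))).
Proof.
  intro H. exists n. split.
  - unfold dle. rewrite H. unfold dadd; simpl. lia.
  - apply pt_eq with m. exact H.
Qed.

Lemma onpath_elim (L : twograph) (l : P L) v : on_path l v ->
  exists n m, dg L l = dadd n m /\ sc L (fst (fac L l n)) = v.
Proof.
  intros (n & Hle & Hpt). exists n, (dsub (dg L l) n).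
  assert (H : dg L l = dadd n (dsub (dg L l) n)).
  { unfold dle, dadd, dsub in *. destruct (dg L l) as [a b], n as [c d]; simpl in *.
    f_equal; lia. }
  split; auto. rewrite (pt_eq L l n _ H) in Hpt.
  apply (f_equal (sc L)) in Hpt. rewrite !sc_id in Hpt. exact Hpt.
Qed.

Lemma onpath_A (L : twograph) (Hiso : HisoP L) (l : P L) K :
  rg L l = sc L l -> dg L l = (0,K) -> K >= 1 ->
  forall x, red x -> rg L x = rg L l -> on_path l (sc L x).
Proof.
  intros Hrs Hd HK x Hx Hr.
  set (t := snd (dg L x)). set (q := t / K). set (r := t mod K).
  assert (Hrk : r < K) by (apply Nat.mod_upper_bound; lia).
  assert (Ht : t = q * K + r).
  { unfold q, r. rewrite Nat.mul_comm. apply Nat.div_mod. lia. }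
  destruct (fac_ex L l (0,r) (0, K - r)) as (p & s & A & B & C & D & E).
  { rewrite Hd. unfold dadd; simpl. f_equal; lia. }
  destruct (lpow_spec L l K Hrs Hd q) as (P1 & P2 & P3).
  assert (Hrp : rg L p = rg L l).
  { rewrite <- D. rewrite rg_comp by exact A. reflexivity. }
  assert (Ey : sc L (lpow L l q) = rg L p) by congruence.
  assert (Hxy : x = comp L (lpow L l q) p).
  { apply (red_unique_rg L Hiso t).
    - rewrite (red_dg L x Hx). reflexivity.
    - rewrite dg_comp by exact Ey. rewrite P3, B. unfold dadd; simpl. f_equal. lia.
    - rewrite rg_comp by exact Ey. congruence. }
  rewrite Hxy, sc_comp by exact Ey.
  replace p with (fst (fac L l (0,r))) by (rewrite E; reflexivity).
  apply onpath_intro with (m := (0, K - r)). rewrite Hd. unfold dadd; simpl. f_equal; lia.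
Qed.

Lemma onpath_B (L : twograph) (Hiso : HisoP L) (l : P L) : red l -> isolated_cycle l ->
  forall v x, on_path l v -> red x -> rg L x = v -> on_path l (sc L x).
Proof.
  intros Hl Hi v x Hv Hx Hr.
  destruct (rcyc L l Hl Hi) as (Hrs & K & HK & Hd).
  destruct (onpath_elim L l v Hv) as (n & m & Hnm & Hs).
  destruct (fac_ex L l n m Hnm) as (p & s & A & B & C & D & E).
  rewrite E in Hs; simpl in Hs.
  assert (Hrp : rg L p = rg L l) by (rewrite <- D, rg_comp by exact A; reflexivity).
  assert (Hpx : sc L p = rg L x) by congruence.
  assert (Hrn : fst n = 0).
  { unfold red in Hl. rewrite Hnm in Hl. unfold dadd in Hl; simpl in Hl. lia. }
  replace (sc L x) with (sc L (comp L p x)) by (apply sc_comp; exact Hpx).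
  apply (onpath_A L Hiso l K Hrs Hd HK).
  - unfold red in *. rewrite dg_comp by exact Hpx. unfold dadd; simpl. rewrite B. lia.
  - rewrite rg_comp by exact Hpx. exact Hrp.
Qed.

Lemma onpath_C (L : twograph) (Hiso : HisoP L) (l : P L) : red l -> isolated_cycle l ->
  forall v x, on_path l v -> red x -> sc L x = v -> on_path l (rg L x).
Proof.
  intros Hl Hi v x Hv Hx Hsx.
  destruct (rcyc L l Hl Hi) as (Hrs & K & HK & Hd).
  destruct (onpath_elim L l v Hv) as (n & m & Hnm & Hs).
  destruct (fac_ex L l n m Hnm) as (p & s & A & B & C & D & E).
  rewrite E in Hs; simpl in Hs.
  assert (Hrp : rg L p = rg L l) by (rewrite <- D, rg_comp by exact A; reflexivity).
  assert (Hrn : fst n = 0).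
  { unfold red in Hl. rewrite Hnm in Hl. unfold dadd in Hl; simpl in Hl. lia. }
  set (a := snd (dg L x)).
  destruct (lpow_spec L l K Hrs Hd a) as (P1&P2&P3).
  assert (Ey : sc L (lpow L l a) = rg L p) by congruence.
  set (y := comp L (lpow L l a) p).
  assert (Hdy : dg L y = (0, a*K + snd n)).
  { unfold y; rewrite dg_comp by exact Ey; rewrite P3, B. unfold dadd; simpl. f_equal. lia. }
  assert (Hak : a <= a*K) by nia.
  destruct (fac_ex L y (0, a*K + snd n - a) (0, a)) as (y1 & y2 & A1 & B1 & C1 & D1 & _).
  { rewrite Hdy. unfold dadd; simpl. f_equal. lia. }
  assert (Hy2 : y2 = x).
  { apply (red_unique_sc L Hiso a); auto.
    - rewrite (red_dg L x Hx). reflexivity.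
    - rewrite <- (sc_comp L y1 y2 A1), D1. unfold y. rewrite sc_comp by exact Ey. congruence. }
  rewrite <- Hy2, <- A1.
  apply (onpath_A L Hiso l K Hrs Hd HK).
  - unfold red. rewrite B1. reflexivity.
  - rewrite <- (rg_comp L y1 y2 A1), D1. unfold y. rewrite rg_comp by exact Ey. exact P1.
Qed.

Lemma red_exists (L : twograph) (Hiso : HisoP L) (v : V L) k :
  (exists x, dg L x = (0,k) /\ rg L x = v) /\ (exists x, dg L x = (0,k) /\ sc L x = v).
Proof.
  destruct (Hiso v) as (c & Hc & Hi & Hrc).
  destruct (rcyc L c Hc Hi) as (Hrs & K & HK & Hd).
  destruct (lpow_spec L c K Hrs Hd k) as (P1&P2&P3).
  assert (k <= k*K) by nia.
  split.
  - destruct (fac_ex L (lpow L c k) (0,k) (0, k*K - k)) as (x & s & A & B & C & D & _).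
    { rewrite P3. unfold dadd; simpl. f_equal. lia. }
    exists x. split; auto. rewrite <- (rg_comp L x s A), D. congruence.
  - destruct (fac_ex L (lpow L c k) (0,k*K - k) (0, k)) as (s & x & A & B & C & D & _).
    { rewrite P3. unfold dadd; simpl. f_equal. lia. }
    exists x. split; auto. rewrite <- (sc_comp L s x A), D. congruence.
Qed.

Theorem lemma3p3 (L : twograph)
  (Hrf : row_finite L)
  (Hnoblue : forall l : P L, blue l -> ~ cycle l)
  (Hiso : forall v : V L, exists l : P L,
      red l /\ isolated_cycle l /\ rg L l = v)
  (l1 l2 : P L)
  (H1 : red l1 /\ isolated_cycle l1)
  (H2 : red l2 /\ isolated_cycle l2) :
  (* (1) *)
  (forall mu : P L, red mu -> on_path l1 (rg L mu) ->
     (forall sg, blue sg -> rg L sg = sc L mu -> on_path l2 (sc L sg) ->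
        blue (F1 mu sg) /\ rg L (F1 mu sg) = rg L mu /\
        on_path l2 (sc L (F1 mu sg)) /\ dg L (F1 mu sg) = dg L sg) /\
     (forall sg sg', blue sg -> rg L sg = sc L mu -> on_path l2 (sc L sg) ->
        blue sg' -> rg L sg' = sc L mu -> on_path l2 (sc L sg') ->
        F1 mu sg = F1 mu sg' -> sg = sg') /\
     (forall tau, blue tau -> rg L tau = rg L mu -> on_path l2 (sc L tau) ->
        exists sg, blue sg /\ rg L sg = sc L mu /\ on_path l2 (sc L sg) /\
          F1 mu sg = tau))
  /\
  (* (2) *)
  (forall nu : P L, red nu -> on_path l2 (rg L nu) ->
     (forall sg, blue sg -> on_path l1 (rg L sg) -> sc L sg = rg L nu ->
        blue (F2 sg nu) /\ on_path l1 (rg L (F2 sg nu)) /\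
        sc L (F2 sg nu) = sc L nu /\ dg L (F2 sg nu) = dg L sg) /\
     (forall sg sg', blue sg -> on_path l1 (rg L sg) -> sc L sg = rg L nu ->
        blue sg' -> on_path l1 (rg L sg') -> sc L sg' = rg L nu ->
        F2 sg nu = F2 sg' nu -> sg = sg') /\
     (forall tau, blue tau -> on_path l1 (rg L tau) -> sc L tau = sc L nu ->
        exists sg, blue sg /\ on_path l1 (rg L sg) /\ sc L sg = rg L nu /\
          F2 sg nu = tau)).
Proof.
  destruct H1 as [Hr1 Hi1]. destruct H2 as [Hr2 Hi2].
  assert (Hdadd : forall m n, dadd m n = dadd n m)
    by (intros [a b] [c d]; unfold dadd; simpl; f_equal; lia).
  split.
  - intros mu Hmu _.
    assert (Fwd : forall sg, blue sg -> rg L sg = sc L mu -> on_path l2 (sc L sg) ->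
       exists b, sc L (F1 mu sg) = rg L b /\ dg L (F1 mu sg) = dg L sg /\
         dg L b = dg L mu /\ comp L (F1 mu sg) b = comp L mu sg).
    { intros sg Hsg Hrs Hon.
      assert (E : sc L mu = rg L sg) by auto.
      destruct (fac_ex L (comp L mu sg) (dg L sg) (dg L mu)) as (a & b & A & B & C & D & _).
      { rewrite dg_comp by exact E. apply Hdadd. }
      rewrite (F1_eq L mu sg a b E A B D). exists b. repeat split; assumption. }
    split; [|split].
    + intros sg Hsg Hrs Hon.
      destruct (Fwd sg Hsg Hrs Hon) as (b & A & B & C & D).
      split; [|split; [|split]].
      * unfold blue. rewrite B. exact Hsg.
      * rewrite <- (rg_comp L _ b A), D, rg_comp by congruence. reflexivity.
      * rewrite A. apply (onpath_C L Hiso l2 Hr2 Hi2 (sc L sg) b Hon).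
        -- unfold red. rewrite C. exact Hmu.
        -- rewrite <- (sc_comp L _ b A), D, sc_comp by congruence. reflexivity.
      * exact B.
    + intros sg sg' Hsg Hrs Hon Hsg' Hrs' Hon' Heq.
      destruct (Fwd sg Hsg Hrs Hon) as (b & A & B & C & D).
      destruct (Fwd sg' Hsg' Hrs' Hon') as (b' & A' & B' & C' & D').
      rewrite Heq in A, B, D.
      assert (Hb : b = b').
      { apply (red_unique_rg L Hiso (snd (dg L mu))).
        - rewrite C. apply red_dg; exact Hmu.
        - rewrite C'. apply red_dg; exact Hmu.
        - congruence. }
      assert (Hc : comp L mu sg = comp L mu sg') by congruence.
      pose proof (fac_eq L mu sg (eq_sym Hrs)) as X1.
      pose proof (fac_eq L mu sg' (eq_sym Hrs')) as X2.
      rewrite Hc, X2 in X1. congruence.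
    + intros tau Htau Hrt Hon.
      destruct (red_exists L Hiso (sc L tau) (snd (dg L mu))) as [[rho [Hdr Hrr]] _].
      assert (E : sc L tau = rg L rho) by auto.
      destruct (fac_ex L (comp L tau rho) (dg L mu) (dg L tau)) as (m' & sg & A & B & C & D & _).
      { rewrite dg_comp by exact E. rewrite Hdr, <- (red_dg L mu Hmu). apply Hdadd. }
      assert (Hm : m' = mu).
      { apply (red_unique_rg L Hiso (snd (dg L mu))).
        - rewrite B. apply red_dg; exact Hmu.
        - apply red_dg; exact Hmu.
        - rewrite <- (rg_comp L m' sg A), D, rg_comp by exact E. exact Hrt. }
      subst m'.
      exists sg. split; [|split; [|split]].
      * unfold blue. rewrite C. exact Htau.
      * congruence.
      * rewrite <- (sc_comp L mu sg A), D, sc_comp by exact E.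
        apply (onpath_B L Hiso l2 Hr2 Hi2 (sc L tau) rho Hon); auto.
        unfold red; rewrite Hdr; reflexivity.
      * apply (F1_eq L mu sg tau rho A E (eq_sym C) (eq_sym D)).
  - intros nu Hnu _.
    assert (Fwd : forall sg, blue sg -> on_path l1 (rg L sg) -> sc L sg = rg L nu ->
       exists a, sc L a = rg L (F2 sg nu) /\ dg L a = dg L nu /\
         dg L (F2 sg nu) = dg L sg /\ comp L a (F2 sg nu) = comp L sg nu).
    { intros sg Hsg Hon E.
      destruct (fac_ex L (comp L sg nu) (dg L nu) (dg L sg)) as (a & b & A & B & C & D & _).
      { rewrite dg_comp by exact E. apply Hdadd. }
      rewrite (F2_eq L sg nu a b A B D). exists a. repeat split; assumption. }
    split; [|split].
    + intros sg Hsg Hon E.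
      destruct (Fwd sg Hsg Hon E) as (a & A & B & C & D).
      split; [|split; [|split]].
      * unfold blue. rewrite C. exact Hsg.
      * rewrite <- A. apply (onpath_B L Hiso l1 Hr1 Hi1 (rg L sg) a Hon).
        -- unfold red. rewrite B. exact Hnu.
        -- rewrite <- (rg_comp L a _ A), D, rg_comp by exact E. reflexivity.
      * rewrite <- (sc_comp L a _ A), D, sc_comp by exact E. reflexivity.
      * exact C.
    + intros sg sg' Hsg Hon E Hsg' Hon' E' Heq.
      destruct (Fwd sg Hsg Hon E) as (a & A & B & C & D).
      destruct (Fwd sg' Hsg' Hon' E') as (a' & A' & B' & C' & D').
      rewrite Heq in A, C, D.
      assert (Ha : a = a').
      { apply (red_unique_sc L Hiso (snd (dg L nu))).
        - rewrite B. apply red_dg; exact Hnu.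
        - rewrite B'. apply red_dg; exact Hnu.
        - congruence. }
      assert (Hc : comp L sg nu = comp L sg' nu) by congruence.
      assert (Hdd : dg L sg = dg L sg') by congruence.
      pose proof (fac_eq L sg nu E) as X1.
      pose proof (fac_eq L sg' nu E') as X2.
      rewrite Hc, Hdd, X2 in X1. congruence.
    + intros tau Htau Hon Hst.
      destruct (red_exists L Hiso (rg L tau) (snd (dg L nu))) as [_ [al [Hda Hsa]]].
      assert (E : sc L al = rg L tau) by auto.
      destruct (fac_ex L (comp L al tau) (dg L tau) (dg L nu)) as (sg & nu' & A & B & C & D & _).
      { rewrite dg_comp by exact E. rewrite Hda, <- (red_dg L nu Hnu). apply Hdadd. }
      assert (Hn : nu' = nu).
      { apply (red_unique_sc L Hiso (snd (dg L nu))).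
        - rewrite C. apply red_dg; exact Hnu.
        - apply red_dg; exact Hnu.
        - rewrite <- (sc_comp L sg nu' A), D, sc_comp by exact E. congruence. }
      subst nu'.
      exists sg. split; [|split; [|split]].
      * unfold blue. rewrite B. exact Htau.
      * replace (rg L sg) with (rg L al).
        -- apply (onpath_C L Hiso l1 Hr1 Hi1 (rg L tau) al Hon); auto.
           unfold red; rewrite Hda; reflexivity.
        -- rewrite <- (rg_comp L al tau E), <- D, rg_comp by exact A. reflexivity.
      * exact A.
      * assert (Hda' : dg L al = dg L nu).
        { rewrite Hda. symmetry. apply red_dg; exact Hnu. }
        apply (F2_eq L sg nu al tau E Hda' (eq_sym D)).
Qed.
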